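(* Let $n\ge2$ and $D=\mathrm{pdiag}(d_1,\dots,d_n)$ with $d_1\le\dots\le d_n$. Then $\Gamma(D_\lambda)=D_\lambda\oplus D_\lambda^2$.
   Context: Max-plus conventions: $\varepsilon=-\infty$, $\oplus=\max$ (entrywise for matrices), $\otimes=+$, $(A\otimes B)_{ij}=\max_t(A_{it}+B_{tj})$, $A^k$ the $k$-fold max-plus power, $(\alpha\otimes A)_{ij}=\alpha+A_{ij}$. $\mathrm{pdiag}(d_1,\dots,d_n)$ is the matrix with real diagonal entries $d_i$ and off-diagonal entries equal to the real number $0$. For finite $A\in\mathbb{R}^{n\times n}$: $\lambda(A)$ is the maximum cycle mean $\max\{(a_{i_1i_2}+\dots+a_{i_ki_1})/k\}$ over $k\ge1$ and distinct $i_1,\dots,i_k\in[n]$; $A_\lambda=(-\lambda(A))\otimes A$; $\Gamma(A)=A\oplus A^2\oplus\dots\oplus A^n$. *)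

(* Defs.v *)
(* max-plus arithmetic over the extended reals \bar R,
   with epsilon = -oo, (+) = max, (x) = + (adde). *)
From HB Require Import structures.
From mathcomp Require Import all_boot all_order all_algebra.
From mathcomp Require Import constructive_ereal.
Set Implicit Arguments. Unset Strict Implicit. Unset Printing Implicit Defensive.
Import Order.TTheory GRing.Theory Num.Theory.
Local Open Scope ring_scope.
Local Open Scope ereal_scope.

Section MaxPlus.
Variable R : realFieldType.

Definition mp_add n (A B : 'M[\bar R]_n) : 'M[\bar R]_n :=
  \matrix_(i, j) Order.max (A i j) (B i j).

Definition mp_mul n (A B : 'M[\bar R]_n) : 'M[\bar R]_n :=
  \matrix_(i, j) \big[Order.max/-oo]_(t < n) (A i t + B t j).

Definition mp_id n : 'M[\bar R]_n :=
  \matrix_(i, j) if i == j then 0 else -oo.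

Definition mp_pow n (A : 'M[\bar R]_n) (k : nat) : 'M[\bar R]_n :=
  iter k (mp_mul A) (mp_id n).

Definition mp_Gamma n (A : 'M[\bar R]_n) : 'M[\bar R]_n :=
  \big[@mp_add n/const_mx -oo]_(1 <= k < n.+1) mp_pow A k.

Definition pdiag n (d : 'I_n -> R) : 'M[R]_n :=
  \matrix_(i, j) if i == j then d i else 0%R.

(* mean of the cycle c = (i_1,...,i_{k+1}) (indices taken cyclically) *)
Definition cycle_mean n k (A : 'M[R]_n) (c : k.+1.-tuple 'I_n) : R :=
  ((\sum_(s < k.+1) A (tnth c s) (tnth c (ordS s))) / k.+1%:R)%R.

Definition mcm n (A : 'M[R]_n) : \bar R :=
  \big[Order.max/-oo]_(k < n)
     \big[Order.max/-oo]_(c : k.+1.-tuple 'I_n | uniq c) (cycle_mean A c)%:E.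

(* A_lambda = (-lambda(A)) (x) A, as a max-plus matrix *)
Definition mp_normalize n (A : 'M[R]_n) : 'M[\bar R]_n :=
  \matrix_(i, j) (- mcm A + (A i j)%:E).

End MaxPlus.

(* Main.v *)
Require Import Defs.
From HB Require Import structures.
From mathcomp Require Import all_boot all_order all_algebra.
From mathcomp Require Import constructive_ereal.
From mathcomp Require Import lra.
Import Order.TTheory GRing.Theory Num.Theory.
Local Open Scope ring_scope.

Lemma mp_Gamma_entry (R : realFieldType) n (A : 'M[\bar R]_n) i j :
  mp_Gamma A i j = \big[Order.max/-oo%E]_(1 <= k < n.+1) mp_pow A k i j.
Proof.
rewrite /mp_Gamma.
apply: (big_morph (fun M : 'M[\bar R]_n => M i j)) => [x y|]; by rewrite !mxE.
Qed.

Lemma mp_mul_id (R : realFieldType) n (A : 'M[\bar R]_n) : mp_mul A (mp_id R n) = A.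
Proof.
apply/matrixP => i j; rewrite mxE (bigD1 j) //= big1.
  by rewrite mxE eqxx adde0 maxeNy.
by move=> t htj; rewrite mxE (negbTE htj) addeNy.
Qed.

Lemma mcm_pdiag (R : realFieldType) n (d : 'I_n.+2 -> R) :
  exists L : R, mcm (pdiag d) = L%:E /\ 0 <= L /\ forall i, d i <= L.
Proof.
have lb1 : forall i, ((d i)%:E <= mcm (pdiag d))%E.
  move=> i; rewrite /mcm (bigD1 ord0) //= le_max; apply/orP; left.
  rewrite (bigD1 [tuple i]) //= le_max; apply/orP; left.
  by rewrite lee_fin /cycle_mean big_ord1 !(tnth_nth i) /= mxE eqxx divr1.
have lb0 : ((0:R)%:E <= mcm (pdiag d))%E.
  rewrite /mcm (bigD1 (Ordinal (isT : (1 < n.+2)%N))) //= le_max; apply/orP; left.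
  rewrite (bigD1 [tuple ord0; Ordinal (isT : (1 < n.+2)%N)]) //= le_max; apply/orP; left.
  rewrite lee_fin /cycle_mean !big_ord_recl big_ord0 /= !mxE /=.
  by rewrite !addr0 mul0r.
have fin : mcm (pdiag d) != +oo%E.
  rewrite /mcm; apply: (big_ind (fun x => x != +oo%E)) => //.
    by move=> x y hx hy; rewrite maxEle; case: ifP.
  move=> k _; apply: (big_ind (fun x => x != +oo%E)) => //.
  by move=> x y hx hy; rewrite maxEle; case: ifP.
move: lb1 lb0 fin; case: (mcm (pdiag d)) => [r| |] lb1 lb0 fin.
- exists r; split; first by [].
  split; first exact: lb0.
  by move=> i; exact: lb1.
- by rewrite eqxx in fin.
- by move: lb0; rewrite leeNy_eq.
Qed.

Lemma main_aux (R : realFieldType) (n : nat) (d : 'I_n.+2 -> R) :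
  mp_Gamma (mp_normalize (pdiag d)) =
  mp_add (mp_normalize (pdiag d))
         (mp_mul (mp_normalize (pdiag d)) (mp_normalize (pdiag d))).
Proof.
have [L [hL [L0 hdL]]] := mcm_pdiag _ _ d.
set A := mp_normalize (pdiag d).
pose a (i j : 'I_n.+2) : R := if i == j then d i - L else - L.
pose m (i j : 'I_n.+2) : R := if i == j then Num.max (d i - L) (- L - L) else - L.
have hA : forall i j, A i j = (a i j)%:E.
  move=> i j; rewrite /A /a !mxE hL -EFinN -EFinD.
  by case: (i == j); rewrite ?addr0 // addrC.
have pow1 : mp_pow A 1 = A by rewrite /mp_pow /= mp_mul_id.
have pow2 : mp_pow A 2 = mp_mul A A by rewrite /mp_pow /= mp_mul_id.
have claim : forall k, (0 < k)%N -> forall i j, (mp_pow A k i j <= (m i j)%:E)%E.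
  elim => [//|k IH] _ i j.
  case: k IH => [_|k IH].
    rewrite pow1 hA lee_fin /a /m; case: (i == j) => //.
    by rewrite le_max lexx.
  rewrite /mp_pow iterS -/(mp_pow A k.+1) mxE.
  apply: bigmax_le => [|t _]; first exact: leNye.
  apply: le_trans (leeD2l _ (IH isT t j)) _.
  rewrite hA -EFinD lee_fin /a /m; clear IH hA hL pow1 pow2.
  have := hdL i; have := hdL j; have := hdL t.
  case: (eqVneq i t) => [<-|hit]; case: (eqVneq i j) => [<-|hij];
    rewrite ?eqxx //=.
  - by move=> *; rewrite maxEle; case: (leP (d _ - L) (- L - L)) => h; lra.
  - by move=> *; lra.
  - by rewrite eq_sym (negbTE hit) => *; rewrite le_max; apply/orP; right; lra.
  - case: (eqVneq t j) => [<-|htj] * /=.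
      by rewrite maxEle; case: (leP (d _ - L) (- L - L)) => h; lra.
    lra.
have mle : forall i j, ((m i j)%:E <= Order.max (A i j) (mp_mul A A i j))%E.
  move=> i j; rewrite /m; case: (eqVneq i j) => [<-|hij].
    rewrite EFin_max ge_max; apply/andP; split.
      by rewrite le_max hA /a eqxx lexx.
    rewrite le_max; apply/orP; right; rewrite mxE.
    pose t : 'I_n.+2 := if i == ord0 then Ordinal (isT : (1 < n.+2)%N) else ord0.
    have hit : i != t.
      rewrite /t; case: (eqVneq i ord0) => [->|//]; by [].
    apply: le_trans (le_bigmax _ _ t); rewrite !hA /a (negbTE hit) eq_sym (negbTE hit).
    by rewrite -EFinD.
  by rewrite le_max hA /a (negbTE hij) lexx.
apply/matrixP => i j; rewrite mp_Gamma_entry mxE big_ltn // big_ltn //.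
rewrite pow1 pow2 maxA; apply/max_idPl.
rewrite big_seq; apply: bigmax_le => [|k]; first exact: leNye.
rewrite mem_index_iota => /andP[hk _].
have hk0 : (0 < k)%N by case: (k) hk.
apply: (le_trans (claim k hk0 i j)); exact: mle.
Qed.

Theorem lemma5p2 (R : realFieldType) (n : nat) (d : 'I_n -> R)
  (hn : (2 <= n)%N)
  (hd : forall i j : 'I_n, (i <= j)%N -> d i <= d j) :
  mp_Gamma (mp_normalize (pdiag d)) =
  mp_add (mp_normalize (pdiag d))
         (mp_mul (mp_normalize (pdiag d)) (mp_normalize (pdiag d))).
Proof.
case: n d hd hn => [|[|n]] d hd hn; try by [].
exact: (main_aux R n d).
Qed.
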